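(* Let $p_{kl}=(p^1_{kl},p^2_{kl})$ and $c_{kl}=(c^1_{kl},c^2_{kl})$ be two parallel nets in the plane $\mathbb{R}^2$ with the same index set. They are Christoffel dual if and only if there is a collection of real numbers $h_{kl}$ such that for any adjacent vertices $c_{kl}$ and $c_{k'l'}$, $$h_{kl}-h_{k'l'}=(c^1_{kl}-c^1_{k'l'})\,p^2_{kl}-(c^2_{kl}-c^2_{k'l'})\,p^1_{kl}.$$
   Context: Here a (planar) net is a collection of points indexed by $(k,l)$ with $0\le k\le a$, $0\le l\le b$, whose faces are the (labeled, not necessarily convex) quadrilaterals $(k,l),(k+1,l),(k+1,l+1),(k,l+1)$; vertices are adjacent if their indices differ by $1$ in exactly one coordinate, and edges join adjacent vertices. Two nets are parallel if corresponding edges are parallel. Two labeled quadrilaterals $ABCD$ and $A'B'C'D'$ are dual if $AB\parallel A'B'$, $BC\parallel B'C'$, $CD\parallel C'D'$, $DA\parallel D'A'$, $AC\parallel B'D'$, $BD\parallel A'C'$. Two nets are Christoffel dual if their corresponding faces are dual. *)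

(* Defs.v *)
From mathcomp Require Import all_boot all_order all_algebra.
From mathcomp Require Import reals.
Set Implicit Arguments. Unset Strict Implicit. Unset Printing Implicit Defensive.
Import Order.TTheory GRing.Theory Num.Theory.
Local Open Scope ring_scope.

Definition vsub (R : numDomainType) (u v : R * R) : R * R := (u.1 - v.1, u.2 - v.2).

Definition par (R : numDomainType) (u v : R * R) : Prop := u.1 * v.2 - u.2 * v.1 = 0.

(* A net with index set {0..a} x {0..b} is a map nat -> nat -> R*R
   (only values at indices k <= a, l <= b matter). *)
Definition net (R : Type) := nat -> nat -> R * R.

Definition adjacent (a b k l k' l' : nat) : Prop :=
  [/\ (k <= a)%N, (l <= b)%N, (k' <= a)%N, (l' <= b)%N &
   ((k' = k.+1 /\ l' = l) \/ (k = k'.+1 /\ l = l') \/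
    (k' = k /\ l' = l.+1) \/ (k' = k /\ l = l'.+1))].

Definition parallel_nets (R : numDomainType) (a b : nat) (p c : net R) : Prop :=
  forall k l k' l', adjacent a b k l k' l' ->
    par (vsub (p k' l') (p k l)) (vsub (c k' l') (c k l)).

Definition dual_quads (R : numDomainType) (A B C D A' B' C' D' : R * R) : Prop :=
  [/\ par (vsub B A) (vsub B' A'), par (vsub C B) (vsub C' B'),
      par (vsub D C) (vsub D' C') & par (vsub A D) (vsub A' D')] /\
  (par (vsub C A) (vsub D' B') /\ par (vsub D B) (vsub C' A')).

Definition christoffel_dual (R : numDomainType) (a b : nat) (p c : net R) : Prop :=
  forall k l, (k < a)%N -> (l < b)%N ->
    dual_quads (p k l) (p k.+1 l) (p k.+1 l.+1) (p k l.+1)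
               (c k l) (c k.+1 l) (c k.+1 l.+1) (c k l.+1).

(* Main.v *)
Require Import Defs.
From mathcomp Require Import all_boot all_order all_algebra.
From mathcomp Require Import reals.
From mathcomp Require Import lra ring.
Import Order.TTheory GRing.Theory Num.Theory.
Local Open Scope ring_scope.

Section S.
Variables (R : realType) (a b : nat) (p c : net R).

Definition G k l k' l' : R :=
  ((c k l).1 - (c k' l').1) * (p k l).2 - ((c k l).2 - (c k' l').2) * (p k l).1.

Fixpoint hrow k := match k with 0 => 0 | k.+1 => hrow k - G k 0 k.+1 0 end.
Fixpoint H k l := match l with 0 => hrow k | l.+1 => H k l - G k l k l.+1 end.

Hypothesis Hpar : parallel_nets a b p c.

Lemma Gsym k l k' l' : adjacent a b k l k' l' -> G k' l' k l = - G k l k' l'.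
Proof.
move=> /Hpar; rewrite /par /vsub /G /=. move=> E. lra.
Qed.

Lemma face k l : (k < a)%N -> (l < b)%N ->
  christoffel_dual a b p c ->
  G k l k.+1 l + G k.+1 l k.+1 l.+1 + G k.+1 l.+1 k l.+1 + G k l.+1 k l = 0.
Proof.
move=> ka lb /(_ k l ka lb) [[E1 E2 E3 E4] [D1 D2]].
move: E1 E2 E3 E4 D1 D2; rewrite /par /vsub /G /= => *. lra.
Qed.

Lemma key k l : christoffel_dual a b p c -> (k < a)%N -> (l <= b)%N ->
  H k l - H k.+1 l = G k l k.+1 l.
Proof.
move=> cd ka; elim: l => [|l IH] lb /=; first by lra.
have IH' := IH (ltnW lb).
have F := face k l ka lb cd.
have S1 : G k.+1 l.+1 k l.+1 = - G k l.+1 k.+1 l.+1.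
  apply: Gsym; (split; try done; try exact: ltnW; intuition).
have S2 : G k l.+1 k l = - G k l k l.+1.
  apply: Gsym; (split; try done; try exact: ltnW; intuition).
lra.
Qed.

End S.

Theorem lemma7 (R : realType) (a b : nat) (p c : net R) :
  parallel_nets a b p c ->
  (christoffel_dual a b p c <->
   exists h : nat -> nat -> R,
     forall k l k' l', adjacent a b k l k' l' ->
       h k l - h k' l' =
       ((c k l).1 - (c k' l').1) * (p k l).2 - ((c k l).2 - (c k' l').2) * (p k l).1).
Proof.
move=> Hp; split.
- move=> cd; exists (@H R p c); move=> k l k' l' adj.
  have adj' := adj; case: adj' => ka lb ka' lb' [[E1 E2]|[[E1 E2]|[[E1 E2]|[E1 E2]]]]; subst.
  + exact: (@key R a b p c Hp k l cd ka' lb).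
  + first [have := @key R a b p c Hp k' _ cd ka lb | have := @key R a b p c Hp k' _ cd ka lb'].
    have := @Gsym R a b p c Hp _ _ _ _ adj. rewrite /G => *. lra.
  + by rewrite /= /G; lra.
  + have := @Gsym R a b p c Hp _ _ _ _ adj. rewrite /= /G => *. lra.
- move=> [h Hh] k l ka lb.
  have A1 : adjacent a b k l k.+1 l by (split; try done; try exact: ltnW; intuition).
  have A2 : adjacent a b k.+1 l k.+1 l.+1 by (split; try done; try exact: ltnW; intuition).
  have A3 : adjacent a b k.+1 l.+1 k l.+1 by (split; try done; try exact: ltnW; intuition).
  have A4 : adjacent a b k l.+1 k l by (split; try done; try exact: ltnW; intuition).
  have P1 := Hp _ _ _ _ A1. have P2 := Hp _ _ _ _ A2.
  have P3 := Hp _ _ _ _ A3. have P4 := Hp _ _ _ _ A4.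
  have H1 := Hh _ _ _ _ A1. have H2 := Hh _ _ _ _ A2.
  have H3 := Hh _ _ _ _ A3. have H4 := Hh _ _ _ _ A4.
  move: P1 P2 P3 P4; rewrite /par /vsub /= => P1 P2 P3 P4.
  split; first by split.
  split; rewrite /par /vsub /=; lra.
Qed.
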